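(* Let $p$ be an odd prime, $n$ a positive integer with $\gcd(n,p)=1$, and let $S$ be a uniquely negacyclic subspace of $\mathbb{F}_p^n\times\mathbb{F}_p^n$ with generating pair $(g,f)$. Then $S$ is totally isotropic if and only if $$g(X)f(X^{-1})=f(X)g(X^{-1})\mod X^n+1.$$ Further, an element $(\mathbf{a},\mathbf{b})\in\mathbb{F}_p^n\times\mathbb{F}_p^n$ lies in $S^{\perp}$ if and only if $$a(X)f(X^{-1})=b(X)g(X^{-1})\mod X^n+1.$$
   Context: Let $N:\mathbb{F}_p^n\to\mathbb{F}_p^n$ be $(u_0,\dots,u_{n-1})\mapsto(-u_{n-1},u_0,\dots,u_{n-2})$; a subspace $S$ is simultaneously negacyclic if $(\mathbf{a},\mathbf{b})\in S$ implies $(N\mathbf{a},N\mathbf{b})\in S$. Let $\mathcal{R}=\mathbb{F}_p[X]/\langle X^n+1\rangle$, with vectors $(a_0,\dots,a_{n-1})$ identified with $a(X)=\sum a_iX^i\in\mathcal{R}$; in $\mathcal{R}$, $X^{-1}=-X^{n-1}$ and $a(X^{-1})$ denotes substitution. For a simultaneously negacyclic $S$, let $F=\{\mathbf{a}:(\mathbf{a},\mathbf{b})\in S\}$ (an ideal of $\mathcal{R}$) and $g$ its monic generator dividing $X^n+1$; $S$ is uniquely negacyclic if there is a unique $f\in\mathcal{R}$ with $(g,f)\in S$, and $(g,f)$ is its generating pair. The symplectic inner product is $\langle(\mathbf{a},\mathbf{b}),(\mathbf{c},\mathbf{d})\rangle_s=\mathbf{a}^T\mathbf{d}-\mathbf{b}^T\mathbf{c}$;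 $S$ is totally isotropic if it vanishes on $S\times S$; $S^\perp$ is the symplectic dual of $S$. *)

(* Defs.v *)
From HB Require Import structures.
From mathcomp Require Import all_boot all_order all_algebra.
Set Implicit Arguments. Unset Strict Implicit. Unset Printing Implicit Defensive.
Import Order.TTheory GRing.Theory Num.Theory.
Local Open Scope ring_scope.

Section Negacyclic.
Variables (F : fieldType) (n : nat).

(* negacyclic shift N(u_0,...,u_{n-1}) = (-u_{n-1}, u_0, ..., u_{n-2});
   ord_pred i is i-1 for i>0 and n-1 for i=0 *)
Definition negshift (u : 'rV[F]_n) : 'rV[F]_n :=
  \row_(i < n) (if val i == 0%N then - u 0 (ord_pred i) else u 0 (ord_pred i)).

Definition negmod : {poly F} := 'X^n + 1.

Definition polyv (u : 'rV[F]_n) : {poly F} := \sum_(i < n) u 0 i *: 'X^i.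

Definition vecp (q : {poly F}) : 'rV[F]_n := \row_(i < n) (q %% negmod)`_i.

(* X^{-1} = -X^{n-1} in R; a(X^{-1}) is substitution (then reduce mod X^n+1) *)
Definition Xinv : {poly F} := - 'X^(n.-1).
Definition subst_inv (q : {poly F}) : {poly F} := q \Po Xinv.

Definition is_subspace (S : 'rV[F]_n * 'rV[F]_n -> Prop) : Prop :=
  [/\ S (0, 0),
      forall x y, S x -> S y -> S (x.1 + y.1, x.2 + y.2)
    & forall (c : F) x, S x -> S (c *: x.1, c *: x.2)].

Definition simult_negacyclic (S : 'rV[F]_n * 'rV[F]_n -> Prop) : Prop :=
  forall a b, S (a, b) -> S (negshift a, negshift b).

Definition first_proj (S : 'rV[F]_n * 'rV[F]_n -> Prop) : 'rV[F]_n -> Prop :=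
  fun a => exists b, S (a, b).

Definition monic_generator (S : 'rV[F]_n * 'rV[F]_n -> Prop) (g : {poly F}) : Prop :=
  [/\ g \is monic, g %| negmod &
      forall a, first_proj S a <-> exists h : {poly F}, a = vecp (g * h)].

(* S (simultaneously negacyclic subspace) is uniquely negacyclic with
   generating pair (g, f) *)
Definition generating_pair (S : 'rV[F]_n * 'rV[F]_n -> Prop) (g : {poly F})
    (f : 'rV[F]_n) : Prop :=
  [/\ monic_generator S g, S (vecp g, f) &
      forall f', S (vecp g, f') -> f' = f].

Definition dotv (u v : 'rV[F]_n) : F := \sum_(i < n) u 0 i * v 0 i.

Definition sympl (x y : 'rV[F]_n * 'rV[F]_n) : F := dotv x.1 y.2 - dotv x.2 y.1.

Definition totally_isotropic (S : 'rV[F]_n * 'rV[F]_n -> Prop) : Prop :=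
  forall x y, S x -> S y -> sympl x y = 0.

Definition sympl_dual (S : 'rV[F]_n * 'rV[F]_n -> Prop) : 'rV[F]_n * 'rV[F]_n -> Prop :=
  fun x => forall y, S y -> sympl x y = 0.

End Negacyclic.

(* Main.v *)
Require Import Defs.
From HB Require Import structures.
From mathcomp Require Import all_boot all_order all_algebra.
From mathcomp Require Import zify.
Import GRing.Theory.
Local Open Scope ring_scope.

Section H.
Variables (F : fieldType) (n : nat).
Hypothesis n_gt0 : (0 < n)%N.
Local Notation m := (negmod F n).
Local Notation vecp := (@vecp F n).

Lemma size_m : size m = n.+1.
Proof. by rewrite /negmod -polyC1 size_XnaddC. Qed.

Lemma coef_polyv_nat (u : 'rV[F]_n) k :
  (polyv u)`_k = if (k < n)%N then \sum_(i < n | val i == k) u 0 i else 0.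
Proof.
rewrite /polyv coef_sum.
under eq_bigr do rewrite coefZ coefXn.
case: ltnP => hk.
  rewrite (bigD1 (Ordinal hk)) //= eqxx mulr1.
  rewrite [X in _ = X](big_pred1 (Ordinal hk)); last by move=> i; rewrite /= -val_eqE.
  idtac.
  rewrite big1 ?addr0 // => i /negbTE; rewrite eq_sym -val_eqE /= => ->.
  by rewrite mulr0.
rewrite big1 // => i _; case: eqP => [e|]; last by rewrite mulr0.
by move: (ltn_ord i); rewrite -e ltnNge hk.
Qed.

Lemma coef_polyv (u : 'rV[F]_n) (i : 'I_n) : (polyv u)`_i = u 0 i.
Proof.
rewrite coef_polyv_nat ltn_ord (big_pred1 i) // => j; by rewrite /= -val_eqE.
Qed.

Lemma size_polyv (u : 'rV[F]_n) : (size (polyv u) <= n)%N.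
Proof.
apply/leq_sizeP => j hj; rewrite coef_polyv_nat ltnNge hj //.
Qed.

Lemma vecp_polyv u : vecp (polyv u) = u.
Proof.
apply/rowP => i; rewrite mxE modp_small ?coef_polyv //.
by rewrite size_m ltnS size_polyv.
Qed.

Lemma size_modm (q : {poly F}) : (size (q %% m)%R <= n)%N.
Proof. by rewrite -ltnS -size_m ltn_modp -size_poly_gt0 size_m. Qed.

Lemma polyv_vecp q : polyv (vecp q) = q %% m.
Proof.
apply/polyP => i; rewrite coef_polyv_nat.
case: ltnP => hi.
  by rewrite (big_pred1 (Ordinal hi)) ?mxE // => j; rewrite /= -val_eqE.
by rewrite nth_default // (leq_trans (size_modm q)).
Qed.

Lemma vecp_mod q : vecp (q %% m) = vecp q.
Proof. by apply/rowP => i; rewrite !mxE modp_id. Qed.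

Lemma vecpD q r : vecp (q + r) = vecp q + vecp r.
Proof. by apply/rowP => i; rewrite !mxE modpD coefD. Qed.

Lemma vecpZ c q : vecp (c *: q) = c *: vecp q.
Proof. by apply/rowP => i; rewrite !mxE modpZl coefZ. Qed.

Lemma vecpN q : vecp (- q) = - vecp q.
Proof. by apply/rowP => i; rewrite !mxE modpN coefN. Qed.

Lemma vecp_eq q r : vecp q = vecp r <-> q %% m = r %% m.
Proof.
split=> [h|h]; last by rewrite -vecp_mod h vecp_mod.
by rewrite -!polyv_vecp h.
Qed.


Lemma coef_m k : m`_k = ((k == n)%N%:R + (k == 0)%N%:R).
Proof. by rewrite /negmod coefD coefXn coef1. Qed.

Lemma val_ord_pred (i : 'I_n) :
  nat_of_ord (ord_pred i) = if nat_of_ord i == 0%N then n.-1 else (nat_of_ord i).-1.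
Proof.
rewrite /=; case: i => [[|i] hi] /=.
  by rewrite add0n modn_small // prednK.
by rewrite modnDr modn_small // ltnW.
Qed.

Lemma negshiftE (u : 'rV[F]_n) : negshift u = vecp ('X * polyv u).
Proof.
set P := polyv u; set c := P`_n.-1.
have hm : ('X * P) %% m = 'X * P - c *: m.
  rewrite -[in LHS](subrK (c *: m) ('X * P)) addrC -mul_polyC.
  rewrite modp_addl_mul_small // mul_polyC size_m ltnS.
  apply/leq_sizeP => k hk; rewrite coefB coefZ coef_m coefXM.
  have -> : (k == 0)%N = false by apply/negbTE; rewrite -lt0n (leq_trans n_gt0).
  rewrite addr0; case: eqP => [->|/eqP kn]; first by rewrite mulr1 subrr.
  rewrite mulr0 subr0 nth_default //.
  have: (n < k)%N by rewrite ltn_neqAle eq_sym kn.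
  by move=> h; rewrite (leq_trans (size_polyv u)) // -ltnS prednK // (leq_trans _ h).
apply/rowP => i; rewrite !mxE hm coefB coefZ coef_m coefXM.
have -> : (nat_of_ord i == n) = false by rewrite ltn_eqF.
rewrite add0r; case: eqP => [i0|i0].
  rewrite mulr1 sub0r; congr (- _).
  by rewrite /c -coef_polyv val_ord_pred i0.
rewrite mulr0 subr0 -coef_polyv val_ord_pred; case: ifP => // /eqP h; by case: (i0 h).
Qed.

Lemma negshift_vecp q : negshift (vecp q) = vecp ('X * q).
Proof. by rewrite negshiftE; apply/vecp_eq; rewrite polyv_vecp modp_mul. Qed.

Lemma mod_eq_sub a b : (a - b) %% m = 0 -> a %% m = b %% m.
Proof. by rewrite modpD modpN => /eqP; rewrite subr_eq0 => /eqP. Qed.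

Lemma XnkE k : ('X^(n + k)) %% m = (- 'X^k) %% m.
Proof.
apply: mod_eq_sub; rewrite opprK exprD.
have -> : 'X^n * 'X^k + 'X^k = 'X^k * m by rewrite /negmod mulrDr mulr1 mulrC.
exact: modp_mull.
Qed.

Definition ee j : {poly F} := if j == 0%N then 1 else - 'X^(n - j).

Lemma Xinv_ee j : (j < n)%N -> (Xinv F n * ee j) %% m = (- 'X^(n - j.+1)) %% m.
Proof.
move=> hj; rewrite /ee /Xinv; case: eqP => [->|/eqP j0].
  by rewrite mulr1 subn1.
rewrite mulrNN -exprD.
have -> : (n.-1 + (n - j) = n + (n - j.+1))%N.
  by move: j0 hj; lia.
exact: XnkE.
Qed.

Lemma Xinv_pow j : (j < n)%N -> (Xinv F n ^+ j) %% m = ee j %% m.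
Proof.
elim: j => [|j IH] hj; first by rewrite expr0.
by rewrite exprS -modp_mul IH ?(ltnW hj) // modp_mul Xinv_ee ?(ltnW hj) //.
Qed.

Lemma Xinv_n : (Xinv F n ^+ n) %% m = - 1.
Proof.
have -> : Xinv F n ^+ n = Xinv F n * Xinv F n ^+ n.-1 by rewrite -exprS prednK.
rewrite -modp_mul Xinv_pow ?prednK ?ltn_pred //.
rewrite modp_mul Xinv_ee ?prednK ?ltn_pred // subnn expr0 modp_small //.
by rewrite size_m size_polyN size_poly1.
Qed.

Lemma comp_Xn k (q : {poly F}) : 'X^k \Po q = q ^+ k.
Proof.
elim: k => [|k IH]; first by rewrite !expr0 -polyC1 comp_polyC.
by rewrite !exprS comp_polyM comp_polyX IH.
Qed.

Lemma subst_inv_m : (subst_inv n m) %% m = 0.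
Proof.
have -> : subst_inv n m = Xinv F n ^+ n + 1.
  by rewrite /subst_inv /negmod comp_polyD -polyC1 comp_polyC comp_Xn polyC1.
by rewrite modpD Xinv_n modp_small ?addNr // size_poly1 size_m.
Qed.

Lemma subst_inv_mod q : (subst_inv n (q %% m)) %% m = (subst_inv n q) %% m.
Proof.
rewrite [in RHS](divp_eq q m) /subst_inv comp_polyD comp_polyM modpD.
by rewrite -modp_mul subst_inv_m mulr0 mod0p add0r.
Qed.

Definition c0 (q : {poly F}) : F := (q %% m)`_0.

Lemma c0D a b : c0 (a + b) = c0 a + c0 b.
Proof. by rewrite /c0 modpD coefD. Qed.
Lemma c0N a : c0 (- a) = - c0 a.
Proof. by rewrite /c0 modpN coefN. Qed.
Lemma c0Z c a : c0 (c *: a) = c * c0 a.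
Proof. by rewrite /c0 modpZl coefZ. Qed.
Lemma c00 : c0 0 = 0.
Proof. by rewrite /c0 mod0p coef0. Qed.
Lemma c0_sum (I : finType) (G : I -> {poly F}) : c0 (\sum_i G i) = \sum_i c0 (G i).
Proof. exact: (big_morph c0 c0D c00). Qed.
Lemma c0_mod a : c0 (a %% m) = c0 a.
Proof. by rewrite /c0 modp_id. Qed.

Lemma c0Xk k : (k < n + n)%N -> c0 ('X^k) = (k == 0%N)%:R - (k == n)%:R.
Proof.
move=> hk; case: (ltnP k n) => hkn.
  by rewrite /c0 modp_small ?size_m ?size_polyXn // coefXn eq_sym (ltn_eqF hkn) subr0.
have -> : k = (n + (k - n))%N by rewrite subnKC.
rewrite /c0 XnkE modp_small; last by rewrite size_m size_polyN size_polyXn; lia.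
rewrite coefN coefXn.
have -> : (n + (k - n) == 0)%N = false by lia.
have -> : (n + (k - n) == n)%N = (k - n == 0)%N by lia.
by rewrite eq_sym sub0r.
Qed.

Lemma c0Xe i j : (i < n)%N -> (j < n)%N -> c0 ('X^i * ee j) = (i == j)%:R.
Proof.
move=> hi hj; rewrite /ee; case: eqP => [->|/eqP j0].
  rewrite mulr1 c0Xk; last lia.
  by rewrite (ltn_eqF hi) subr0.
rewrite mulrN -exprD c0N c0Xk; last lia.
have -> : (i + (n - j) == 0)%N = false by lia.
have -> : (i + (n - j) == n)%N = (i == j) by lia.
by rewrite sub0r opprK.
Qed.


Lemma c0XXinv (i j : 'I_n) : c0 ('X^i * Xinv F n ^+ j) = (i == j)%:R.
Proof.
by rewrite -c0_mod -modp_mul Xinv_pow // modp_mul c0_mod c0Xe.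
Qed.

Lemma dotvE (u v : 'rV[F]_n) : dotv u v = c0 (polyv u * subst_inv n (polyv v)).
Proof.
have hs : subst_inv n (polyv v) = \sum_(j < n) v 0 j *: Xinv F n ^+ j.
  rewrite /subst_inv /polyv raddf_sum; apply: eq_bigr => j _.
  by rewrite -[LHS]/((v 0 j *: 'X^j) \Po Xinv F n) comp_polyZ comp_Xn.
rewrite hs {1}/polyv mulr_suml c0_sum /dotv; apply: eq_bigr => i _.
rewrite mulr_sumr c0_sum (bigD1 i) //= big1 ?addr0.
  by rewrite -scalerAr -scalerAl c0Z c0Z c0XXinv eqxx mulr1 mulrC.
move=> j /negbTE ji; rewrite -scalerAr -scalerAl c0Z c0Z c0XXinv.
by rewrite eq_sym ji mulr0 mulr0.
Qed.

Lemma dotv_nondeg (u : 'rV[F]_n) : (forall v, dotv u v = 0) -> u = 0.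
Proof.
move=> h; apply/rowP => i; rewrite mxE -(h (\row_k ((k == i)%:R))) /dotv.
rewrite (bigD1 i) //= big1 ?addr0; first by rewrite mxE eqxx mulr1.
by move=> j /negbTE ji; rewrite mxE ji mulr0.
Qed.


Lemma c0_modl a b : c0 ((a %% m) * b) = c0 (a * b).
Proof. by rewrite /c0 mulrC modp_mul mulrC. Qed.

Lemma c0_subst_mod a q : c0 (a * subst_inv n (q %% m)) = c0 (a * subst_inv n q).
Proof. by rewrite /c0 -modp_mul subst_inv_mod modp_mul. Qed.

Lemma vecp0 : vecp 0 = 0.
Proof. by apply/rowP => i; rewrite !mxE mod0p coef0. Qed.

Lemma pairing r : (forall h, c0 (r * subst_inv n h) = 0) <-> r %% m = 0.
Proof.
split=> [h|h q]; last by rewrite -c0_modl h mul0r c00.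
have : vecp r = 0.
  apply: dotv_nondeg => v; rewrite dotvE polyv_vecp c0_modl; exact: h.
by rewrite -vecp0 => /vecp_eq; rewrite mod0p.
Qed.

Variables (S : 'rV[F]_n * 'rV[F]_n -> Prop) (g : {poly F}) (f : 'rV[F]_n).
Hypotheses (hsub : is_subspace S) (hneg : simult_negacyclic S)
  (hgp : generating_pair S g f).
Local Notation fp := (polyv f).

Lemma S_add x y : S x -> S y -> S (x.1 + y.1, x.2 + y.2).
Proof. by case: hsub => _ H _; apply: H. Qed.
Lemma S_scale c x : S x -> S (c *: x.1, c *: x.2).
Proof. by case: hsub => _ _; apply. Qed.

Lemma S_gen h : S (vecp (g * h), vecp (fp * h)).
Proof.
elim/poly_ind: h => [|h c IH].
  by rewrite !mulr0 vecp0; case: hsub.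
have e q : q * (h * 'X + c%:P) = 'X * (q * h) + c *: q.
  by rewrite mulrDr mulrA [_ * 'X]mulrC (mulrC q c%:P) mul_polyC.
rewrite !e !vecpD !vecpZ -!negshift_vecp.
have := S_add _ _ (hneg _ _ IH) (S_scale c _ (let: And3 _ H _ := hgp in H)).
by rewrite /= vecp_polyv.
Qed.

Lemma S_char x : S x -> exists h, x = (vecp (g * h), vecp (fp * h)).
Proof.
move=> Sx; case: hgp => [[_ _ hF] Sg uniq].
have [h xh] : exists h, x.1 = vecp (g * h) by apply/hF; exists x.2; case: x Sx.
exists h.
have S0 := S_add _ _ Sx (S_scale (-1) _ (S_gen h)).
rewrite /= xh !scaleN1r subrr in S0.
have := S_add _ _ Sg S0; rewrite /= addr0 => /uniq.
case: x Sx xh S0 => a b /= _ -> _ /(congr1 (fun z => z - f)).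
rewrite [f + _]addrC addrK subrr => /eqP; rewrite subr_eq0 => /eqP ->.
by [].
Qed.

Lemma sympl_gen a b h :
  sympl (a, b) (vecp (g * h), vecp (fp * h)) =
  c0 ((polyv a * subst_inv n fp - polyv b * subst_inv n g) * subst_inv n h).
Proof.
rewrite /sympl /= !dotvE !polyv_vecp !c0_subst_mod /subst_inv !comp_polyM.
by rewrite mulrBl -c0N -c0D !mulrA.
Qed.

Lemma dual_char a b : sympl_dual S (a, b) <->
  (polyv a * subst_inv n fp) %% m = (polyv b * subst_inv n g) %% m.
Proof.
split=> [H|H].
  apply: mod_eq_sub; apply/pairing => h; rewrite -sympl_gen; apply: H.
  exact: S_gen.
move=> y /S_char [h ->]; rewrite sympl_gen; move: h; apply/pairing.
by rewrite modpD modpN H subrr.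
Qed.

Lemma iso_char : totally_isotropic S <->
  (g * subst_inv n fp) %% m = (fp * subst_inv n g) %% m.
Proof.
have key : forall h, sympl_dual S (vecp (g * h), vecp (fp * h)) <->
   ((g * subst_inv n fp) * h) %% m = ((fp * subst_inv n g) * h) %% m.
  move=> h; rewrite dual_char !polyv_vecp.
  rewrite ![(_ %% m) * _]mulrC !modp_mul ![subst_inv n _ * _]mulrC.
  by rewrite ![_ * h * _]mulrAC.
split=> [H|H].
  have := (key 1).1; rewrite !mulr1; apply => y Sy; apply: H Sy.
  by have := S_gen 1; rewrite !mulr1.
move=> x y /S_char [h ->] Sy; apply: ((key h).2 _ y Sy).
by rewrite !(mulrC _ h) -[LHS]modp_mul H modp_mul.
Qed.

End H.

Theorem mainTheorem5 (p n : nat) (S : 'rV['F_p]_n * 'rV['F_p]_n -> Prop)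
    (g : {poly 'F_p}) (f : 'rV['F_p]_n) :
  prime p -> odd p -> (0 < n)%N -> coprime n p ->
  is_subspace S -> simult_negacyclic S -> generating_pair S g f ->
  (totally_isotropic S <->
     (g * subst_inv n (polyv f)) %% negmod _ n
       = (polyv f * subst_inv n g) %% negmod _ n)
  /\
  (forall a b : 'rV['F_p]_n,
     sympl_dual S (a, b) <->
     (polyv a * subst_inv n (polyv f)) %% negmod _ n
       = (polyv b * subst_inv n g) %% negmod _ n).
Proof.
move=> _ _ n_gt0 _ hsub hneg hgp; split.
  exact: iso_char.
move=> a b; exact: dual_char.
Qed.
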